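(* For every integer $n\ge 4$, $\chi^{\mathsf{s}}_{3,4}(n)\ge \lfloor\sqrt{n}\rfloor$.
   Context: A $k$-uniform hypergraph $H=(V,E)$ consists of a finite set $V$ and $E\subseteq\binom{V}{k}$. A (linear) embedding of $H$ into $\mathbb{R}^d$ is a map $\phi:V(H)\to\mathbb{R}^d$ with $\dim\operatorname{aff}\phi(e)=k-1$ for every edge $e$ and $\operatorname{conv}\phi(e_1)\cap\operatorname{conv}\phi(e_2)=\operatorname{conv}\phi(e_1\cap e_2)$ for all edges $e_1,e_2$. $\mathcal{E}_{d,k}$ is the set of $k$-uniform hypergraphs admitting such an embedding into $\mathbb{R}^d$. A strong $c$-coloring of $H$ is a map $\kappa:V(H)\to\{1,\dots,c\}$ with $|\kappa(e)|=k$ for every edge $e$; $\chi^{\mathsf{s}}(H)$ is the least such $c$. $\chi^{\mathsf{s}}_{d,k}(n)=\max\{\chi^{\mathsf{s}}(H): H\in\mathcal{E}_{d,k},\ |V(H)|=n\}$. *)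

(* Defs.v *)
From HB Require Import structures.
From Stdlib Require Import Reals.
From mathcomp Require Import all_boot.

Set Implicit Arguments.
Unset Strict Implicit.
Unset Printing Implicit Defensive.

Record hypergraph (n k : nat) := Hypergraph {
  hedges : {set {set 'I_n}};
  huniform : forall e, e \in hedges -> #|e| = k }.

Definition strong_colorable n k (H : hypergraph n k) (c : nat) : bool :=
  [exists kappa : {ffun 'I_n -> 'I_c},
     [forall e in hedges H, #|kappa @: e| == k]].

Lemma strong_colorable_n n k (H : hypergraph n k) : strong_colorable H n.
Proof.
apply/existsP; exists [ffun x => x]; apply/forallP => e; apply/implyP => He.
have -> : [ffun x : 'I_n => x] @: e = e.
  by rewrite -[RHS]imset_id; apply: eq_imset => x; rewrite ffunE.
by rewrite (huniform He).
Qed.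

Definition chis n k (H : hypergraph n k) : nat :=
  ex_minn (ex_intro (fun c => strong_colorable H c) n (strong_colorable_n H)).

Definition in_conv (d n : nat) (phi : 'I_n -> 'I_d -> R) (S : {set 'I_n})
    (x : 'I_d -> R) : Prop :=
  exists lam : 'I_n -> R,
    (forall v, v \in S -> Rle R0 (lam v)) /\
    \big[Rplus/R0]_(v in S) lam v = R1 /\
    (forall i, x i = \big[Rplus/R0]_(v in S) Rmult (lam v) (phi v i)).

(* The family (phi v)_{v in S} is affinely independent; for |S| = k this is
   exactly dim aff phi(S) = k - 1. *)
Definition aff_indep (d n : nat) (phi : 'I_n -> 'I_d -> R) (S : {set 'I_n}) : Prop :=
  forall lam : 'I_n -> R,
    \big[Rplus/R0]_(v in S) lam v = R0 ->
    (forall i, \big[Rplus/R0]_(v in S) Rmult (lam v) (phi v i) = R0) ->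
    forall v, v \in S -> lam v = R0.

Definition is_embedding (d n k : nat) (H : hypergraph n k)
    (phi : 'I_n -> 'I_d -> R) : Prop :=
  (forall e, e \in hedges H -> aff_indep phi e) /\
  (forall e1 e2, e1 \in hedges H -> e2 \in hedges H ->
     forall x, (in_conv phi e1 x /\ in_conv phi e2 x) <-> in_conv phi (e1 :&: e2) x).

Definition embeddable (d n k : nat) (H : hypergraph n k) : Prop :=
  exists phi : 'I_n -> 'I_d -> R, is_embedding H phi.

(* Main.v *)
Require Import Defs.
From HB Require Import structures.
From Stdlib Require Import Reals Lra.
From mathcomp Require Import all_boot.
Set Implicit Arguments.
Unset Strict Implicit.

Local Open Scope R_scope.

Lemma Rplus_0l : left_id R0 Rplus. Proof. move=> x; lra. Qed.
Lemma Rplus_A : associative Rplus. Proof. move=> x y z; lra. Qed.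
Lemma Rplus_C : commutative Rplus. Proof. move=> x y; lra. Qed.
HB.instance Definition _ := Monoid.isComLaw.Build R R0 Rplus Rplus_A Rplus_C Rplus_0l.
Lemma Rmult_0l : left_zero R0 Rmult. Proof. move=> x; ring. Qed.
Lemma Rmult_0r : right_zero R0 Rmult. Proof. move=> x; ring. Qed.
HB.instance Definition _ := Monoid.isMulLaw.Build R R0 Rmult Rmult_0l Rmult_0r.
Lemma Rmult_Dl : left_distributive Rmult Rplus. Proof. move=> x y z; ring. Qed.
Lemma Rmult_Dr : right_distributive Rmult Rplus. Proof. move=> x y z; ring. Qed.
HB.instance Definition _ := Monoid.isAddLaw.Build R Rmult Rplus Rmult_Dl Rmult_Dr.

Lemma sumR_ge0 (I : finType) (P : pred I) (F : I -> R) :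
  (forall i, P i -> 0 <= F i) -> 0 <= \big[Rplus/R0]_(i | P i) F i.
Proof.
move=> H; apply: (big_ind (fun x => 0 <= x)) => //; [lra| move=> x y; lra].
Qed.

Lemma sumR_le0 (I : finType) (P : pred I) (F : I -> R) :
  (forall i, P i -> F i <= 0) -> \big[Rplus/R0]_(i | P i) F i <= 0.
Proof.
move=> H; apply: (big_ind (fun x => x <= 0)) => //; [lra| move=> x y; lra].
Qed.

Lemma sumR_term (I : finType) (P : pred I) (F : I -> R) j :
  (forall i, P i -> 0 <= F i) -> P j -> F j <= \big[Rplus/R0]_(i | P i) F i.
Proof.
move=> H Pj; rewrite (bigD1 j Pj) /=.
have := @sumR_ge0 I (fun i => P i && (i != j)) F.
have : forall i, P i && (i != j) -> 0 <= F i by move=> i /andP[]; auto.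
move=> H1 H2; have := H2 H1; lra.
Qed.

Definition fval (c0 c1 c2 c3 : R) (x : 'I_3 -> R) : R :=
  c0 + c1 * x ord0 + c2 * x (@Ordinal 3 1 isT) + c3 * x (@Ordinal 3 2 isT).

Section Sep.
Variables (n : nat) (phi : 'I_n -> 'I_3 -> R) (c0 c1 c2 c3 : R).
Local Notation f := (fval c0 c1 c2 c3).

Lemma fval_conv (S : {set 'I_n}) x lam :
  \big[Rplus/R0]_(v in S) lam v = R1 ->
  (forall i, x i = \big[Rplus/R0]_(v in S) Rmult (lam v) (phi v i)) ->
  \big[Rplus/R0]_(v in S) (lam v * f (phi v)) = f x.
Proof.
move=> Hs Hx; rewrite /fval !Hx.
rewrite (eq_bigr (fun v => c0 * lam v + c1 * (lam v * phi v ord0)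
   + c2 * (lam v * phi v (@Ordinal 3 1 isT)) + c3 * (lam v * phi v (@Ordinal 3 2 isT)))); last first.
  by move=> v _; ring.
rewrite !big_split /= -!big_distrr /= Hs; ring.
Qed.

Lemma sep_conv (S1 S2 : {set 'I_n}) :
  (forall v, v \in S1 -> 0 <= f (phi v)) ->
  (forall v, v \in S1 -> f (phi v) = 0 -> v \in S2) ->
  (forall v, v \in S2 -> f (phi v) <= 0) ->
  forall x, (in_conv phi S1 x /\ in_conv phi S2 x) <-> in_conv phi (S1 :&: S2) x.
Proof.
move=> H1 H1' H2 x; split.
- move=> [[l1 [Hl1 [Hs1 Hx1]]] [l2 [Hl2 [Hs2 Hx2]]]].
  have E1 := fval_conv Hs1 Hx1; have E2 := fval_conv Hs2 Hx2.
  have G1 : forall v, v \in S1 -> 0 <= l1 v * f (phi v).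
    by move=> v Hv; apply: Rmult_le_pos; auto.
  have G2 : forall v, v \in S2 -> l2 v * f (phi v) <= 0.
    move=> v Hv; have := Hl2 v Hv; have := H2 v Hv; nra.
  have fx0 : f x = 0.
    have := sumR_ge0 G1; have := sumR_le0 G2; lra.
  have Z : forall v, v \in S1 -> v \notin S2 -> l1 v = 0.
    move=> v Hv Hn.
    have T := sumR_term G1 Hv.
    have P := G1 v Hv.
    have Hf : f (phi v) <> 0 by move=> Hf; move: (H1' v Hv Hf); rewrite (negbTE Hn).
    have Hf' := H1 v Hv.
    have : l1 v * f (phi v) = 0 by lra.
    case/Rmult_integral => // .
  have split1 : forall F : 'I_n -> R, (forall v, v \in S1 -> v \notin S2 -> F v = 0) ->
     \big[Rplus/R0]_(v in S1) F v = \big[Rplus/R0]_(v in S1 :&: S2) F v.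
    move=> F HF; rewrite (bigID (fun v => v \in S2)) /=.
    rewrite [X in _ + X = _]big1; last by move=> v /andP[]; apply: HF.
    rewrite Rplus_0_r; apply: eq_bigl => v; by rewrite in_setI.
  exists l1; split; [move=> v; rewrite in_setI => /andP[]; auto|split].
  + by rewrite -split1 // => v a b; apply: Z.
  + move=> i; rewrite Hx1 split1 // => v a b; rewrite (Z v a b); ring.
- move=> [l [Hl [Hs Hx]]].
  have ext : forall S : {set 'I_n}, S1 :&: S2 \subset S -> in_conv phi S x.
    move=> S Hsub; exists (fun v => if v \in S1 :&: S2 then l v else 0).
    have E : forall F : 'I_n -> R, \big[Rplus/R0]_(v in S) (if v \in S1 :&: S2 then F v else 0)
        = \big[Rplus/R0]_(v in S1 :&: S2) F v.
      move=> F; rewrite -big_mkcondr /=; apply: eq_bigl => v.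
      case H: (v \in S1 :&: S2); last by rewrite andbF.
      by rewrite andbT (subsetP Hsub).
    split; [move=> v _; case: ifP => ?; [auto|lra]|split].
    + by rewrite E.
    + move=> i; rewrite Hx -E; apply: eq_bigr => v _; case: ifP => _ //; ring.
  by split; apply: ext; [apply: subsetIl|apply: subsetIr].
Qed.
End Sep.

Definition qv (c0 c1 c2 c3 t : R) := c0 + c1 * t + c2 * (t*t) + c3 * (t*t*t).

Section Lag.
Variables t1 t2 t3 t4 y1 y2 y3 y4 : R.
Let D1 := (t1-t2)*(t1-t3)*(t1-t4).
Let D2 := (t2-t1)*(t2-t3)*(t2-t4).
Let D3 := (t3-t1)*(t3-t2)*(t3-t4).
Let D4 := (t4-t1)*(t4-t2)*(t4-t3).
Definition L3 := y1/D1 + y2/D2 + y3/D3 + y4/D4.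
Definition L2 := - (y1*(t2+t3+t4)/D1 + y2*(t1+t3+t4)/D2 + y3*(t1+t2+t4)/D3 + y4*(t1+t2+t3)/D4).
Definition L1 := y1*(t2*t3+t2*t4+t3*t4)/D1 + y2*(t1*t3+t1*t4+t3*t4)/D2 + y3*(t1*t2+t1*t4+t2*t4)/D3 + y4*(t1*t2+t1*t3+t2*t3)/D4.
Definition L0 := - (y1*(t2*t3*t4)/D1 + y2*(t1*t3*t4)/D2 + y3*(t1*t2*t4)/D3 + y4*(t1*t2*t3)/D4).
Lemma L_ok : t1<>t2 -> t1<>t3 -> t1<>t4 -> t2<>t3 -> t2<>t4 -> t3<>t4 ->
  qv L0 L1 L2 L3 t1 = y1 /\ qv L0 L1 L2 L3 t2 = y2 /\ qv L0 L1 L2 L3 t3 = y3 /\ qv L0 L1 L2 L3 t4 = y4.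
Proof.
intros.
assert (t1-t2<>0) by lra. assert (t1-t3<>0) by lra. assert (t1-t4<>0) by lra.
assert (t2-t3<>0) by lra. assert (t2-t4<>0) by lra. assert (t3-t4<>0) by lra.
unfold qv, L0, L1, L2, L3, D1, D2, D3, D4.
repeat split; field; repeat split; lra.
Qed.
End Lag.

Section Quad.
Variables s u w : R.
Let al := / ((u-s)*(u-w)).
Let be := / ((w-s)*(w-u)).
Definition Q2 := al - be.
Definition Q1 := - al * (s+w) + be * (s+u).
Definition Q0 := al * s * w - be * s * u.
Lemma Q_ok : s<>u -> s<>w -> u<>w ->
  qv Q0 Q1 Q2 0 s = 0 /\ qv Q0 Q1 Q2 0 u = 1 /\ qv Q0 Q1 Q2 0 w = -1.
Proof.
intros. assert (u-s<>0) by lra. assert (u-w<>0) by lra. assert (w-s<>0) by lra.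
assert (w-u<>0) by lra.
unfold qv, Q0, Q1, Q2, al, be. repeat split; field; split; auto.
Qed.
End Quad.

Definition tR (i : nat) : R := INR i.
Definition pt (x y z : R) : 'I_3 -> R :=
  fun k => if val k == 0%N then x else if val k == 1%N then y else z.
Definition apt i := pt (tR i) (tR i * tR i) (tR i * tR i * tR i).
Definition bpt e i j := pt ((tR i + tR j)/2) ((tR i * tR i + tR j * tR j)/2)
   ((tR i * tR i * tR i + tR j * tR j * tR j)/2 + e).
Definition cpt e i j := pt ((tR i + tR j)/2) ((tR i * tR i + tR j * tR j)/2 + e)
   ((tR i * tR i * tR i + tR j * tR j * tR j)/2).

Lemma fval_pt c0 c1 c2 c3 x y z : fval c0 c1 c2 c3 (pt x y z) = c0 + c1 * x + c2 * y + c3 * z.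
Proof. by []. Qed.

Lemma fval_a c0 c1 c2 c3 i : fval c0 c1 c2 c3 (apt i) = qv c0 c1 c2 c3 (tR i).
Proof. rewrite /apt fval_pt /qv; ring. Qed.
Lemma fval_b c0 c1 c2 c3 e i j : fval c0 c1 c2 c3 (bpt e i j) =
  (qv c0 c1 c2 c3 (tR i) + qv c0 c1 c2 c3 (tR j))/2 + e * c3.
Proof. rewrite /bpt fval_pt /qv; field. Qed.
Lemma fval_c c0 c1 c2 c3 e i j : fval c0 c1 c2 c3 (cpt e i j) =
  (qv c0 c1 c2 c3 (tR i) + qv c0 c1 c2 c3 (tR j))/2 + e * c2.
Proof. rewrite /cpt fval_pt /qv; field. Qed.

Definition dec (e : R) (m x : nat) : 'I_3 -> R :=
  let p := (x %/ m)%N in let r := (x %% m)%N in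
  if p == r then apt p else if (p < r)%N then bpt e p r else cpt e r p.

Lemma dec_ij e m i j : (j < m)%N -> dec e m (i * m + j) =
  if i == j then apt i else if (i < j)%N then bpt e i j else cpt e j i.
Proof.
move=> Hj; rewrite /dec.
have Hm : (0 < m)%N by apply: leq_ltn_trans Hj.
by rewrite divnMDl // modnMDl divn_small // modn_small // addn0.
Qed.

Lemma tR_neq i j : i <> j -> tR i <> tR j.
Proof. by move=> H; apply: not_INR. Qed.

From mathcomp Require Import zify.

Section Graph.
Variables (n' m : nat) (e : R).
Hypothesis Hmn : (m * m <= n'.+1)%N.

Definition vA i : 'I_n'.+1 := inord (i * m + i).
Definition vB i j : 'I_n'.+1 := inord (i * m + j).
Definition vC i j : 'I_n'.+1 := inord (j * m + i).
Definition phi (v : 'I_n'.+1) : 'I_3 -> R := dec e m v.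
Definition T i j : {set 'I_n'.+1} := vA i |: (vA j |: (vB i j |: [set vC i j])).

Lemma code_lt i j : (i < m)%N -> (j < m)%N -> (i * m + j < n'.+1)%N.
Proof. move=> Hi Hj; apply: leq_trans Hmn; nia. Qed.

Lemma val_code i j : (i < m)%N -> (j < m)%N -> nat_of_ord (inord (i * m + j) : 'I_n'.+1) = (i * m + j)%N.
Proof. by move=> Hi Hj; rewrite inordK // code_lt. Qed.

Lemma code_inj i j k l : (j < m)%N -> (l < m)%N -> (i * m + j = k * m + l)%N -> i = k /\ j = l.
Proof.
move=> Hj Hl H.
have Hm : (0 < m)%N by apply: leq_ltn_trans Hj.
have H1 := congr1 (fun x => x %/ m)%N H; have H2 := congr1 (fun x => x %% m)%N H.
move: H1 H2 => /=; rewrite !divnMDl // !modnMDl !divn_small // !modn_small // !addn0.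
by [].
Qed.

Lemma code_neq i j k l : (i < m)%N -> (j < m)%N -> (k < m)%N -> (l < m)%N ->
  (i != k) || (j != l) -> (inord (i * m + j) : 'I_n'.+1) != inord (k * m + l).
Proof.
move=> Hi Hj Hk Hl Hn; apply/negP => /eqP /(congr1 (@nat_of_ord _)); rewrite !val_code // => E.
have [E1 E2] := code_inj Hj Hl E; subst; by rewrite !eqxx in Hn.
Qed.

Lemma phiA i : (i < m)%N -> phi (vA i) = apt i.
Proof. by move=> Hi; rewrite /phi /vA val_code // dec_ij // eqxx. Qed.
Lemma phiB i j : (i < j)%N -> (j < m)%N -> phi (vB i j) = bpt e i j.
Proof.
move=> Hij Hj; have Hi : (i < m)%N by apply: ltn_trans Hj.
rewrite /phi /vB val_code // dec_ij // Hij; case: eqP => // E; by rewrite E ltnn in Hij.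
Qed.
Lemma phiC i j : (i < j)%N -> (j < m)%N -> phi (vC i j) = cpt e i j.
Proof.
move=> Hij Hj; have Hi : (i < m)%N by apply: ltn_trans Hj.
rewrite /phi /vC val_code // dec_ij //; case: eqP => [E|_]; first by rewrite E ltnn in Hij.
by rewrite ltnNge ltnW.
Qed.

Lemma memT i j v : v \in T i j -> [\/ v = vA i, v = vA j, v = vB i j | v = vC i j].
Proof.
rewrite /T !in_setU1 in_set1.
by case/orP => [/eqP->|/orP [/eqP->|/orP [/eqP->|/eqP->]]]; [apply: Or41|apply: Or42|apply: Or43|apply: Or44].
Qed.

Section Dist.
Variables i j : nat.
Hypotheses (Hij : (i < j)%N) (Hj : (j < m)%N).
Let Hi : (i < m)%N. Proof. exact: ltn_trans Hj. Qed.
Let ne_ij : (i != j). Proof. by rewrite neq_ltn Hij. Qed.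
Let ne_ji : (j != i). Proof. by rewrite neq_ltn Hij orbT. Qed.

Lemma nAiAj : vA i != vA j. Proof. by apply: code_neq => //; rewrite ne_ij. Qed.
Lemma nAiB : vA i != vB i j. Proof. by apply: code_neq => //; rewrite ne_ij orbT. Qed.
Lemma nAiC : vA i != vC i j. Proof. by apply: code_neq => //; rewrite ne_ij. Qed.
Lemma nAjB : vA j != vB i j. Proof. by apply: code_neq => //; rewrite ne_ji. Qed.
Lemma nAjC : vA j != vC i j. Proof. by apply: code_neq => //; rewrite ne_ji orbT. Qed.
Lemma nBC : vB i j != vC i j. Proof. by apply: code_neq => //; rewrite ne_ij. Qed.

Lemma notin1 : vA i \notin (vA j |: (vB i j |: [set vC i j])).
Proof. by rewrite !in_setU1 in_set1 (negbTE nAiAj) (negbTE nAiB) (negbTE nAiC). Qed.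
Lemma notin2 : vA j \notin (vB i j |: [set vC i j]).
Proof. by rewrite !in_setU1 in_set1 (negbTE nAjB) (negbTE nAjC). Qed.
Lemma notin3 : vB i j \notin [set vC i j].
Proof. by rewrite in_set1 (negbTE nBC). Qed.

Lemma cardT : #|T i j| = 4%N.
Proof. by rewrite /T !cardsU1 cards1 notin1 notin2 notin3. Qed.

Lemma sumT (F : 'I_n'.+1 -> R) : \big[Rplus/R0]_(v in T i j) F v =
  F (vA i) + (F (vA j) + (F (vB i j) + F (vC i j))).
Proof. by rewrite /T big_setU1 ?notin1 // big_setU1 ?notin2 // big_setU1 ?notin3 // big_set1. Qed.

Lemma affT : e <> 0 -> aff_indep phi (T i j).
Proof.
move=> He lam Hs Hc.
have Ex := Hc ord0; have Ey := Hc (@Ordinal 3 1 isT); have Ez := Hc (@Ordinal 3 2 isT).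
rewrite sumT in Hs; rewrite sumT phiA // phiA // phiB // phiC // in Ex.
rewrite sumT phiA // phiA // phiB // phiC // in Ey.
rewrite sumT phiA // phiA // phiB // phiC // in Ez.
move: Ex Ey Ez; rewrite /apt /bpt /cpt /pt /= => Ex Ey Ez.
have tn : tR i - tR j <> 0.
  have : tR i <> tR j by apply: tR_neq => E; move: ne_ij; by rewrite E eqxx.
  lra.
set a := lam (vA i) in Hs Ex Ey Ez; set d := lam (vA j) in Hs Ex Ey Ez.
set b := lam (vB i j) in Hs Ex Ey Ez; set c := lam (vC i j) in Hs Ex Ey Ez.
set x := tR i in Hs Ex Ey Ez tn; set y := tR j in Hs Ex Ey Ez tn.
have E1 : (a - d) * (x - y) = 0.
  have -> : (a - d) * (x - y) = 2 * (a * x + (d * y + (b * ((x + y) / 2) + c * ((x + y) / 2))))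
     - (x + y) * (a + (d + (b + c)))  by field.
  rewrite Ex Hs; ring.
have ad : a = d by case: (Rmult_integral _ _ E1) => H; lra.
have E2 : 2 * e * c = 0.
  have -> : 2 * e * c = 2 * (a * (x * x) + (d * (y * y) + (b * ((x * x + y * y) / 2) + c * ((x * x + y * y) / 2 + e))))
     - (x * x + y * y) * (a + (d + (b + c))) - (a - d) * (x * x - y * y) by field.
  rewrite Ey Hs ad; ring.
have E3 : 2 * e * b = 0.
  have -> : 2 * e * b = 2 * (a * (x * x * x) + (d * (y * y * y) + (b * ((x * x * x + y * y * y) / 2 + e) + c * ((x * x * x + y * y * y) / 2))))
     - (x * x * x + y * y * y) * (a + (d + (b + c))) - (a - d) * (x * x * x - y * y * y) by field.
  rewrite Ez Hs ad; ring.
have c0 : c = 0 by case: (Rmult_integral _ _ E2) => H //; case: (Rmult_integral _ _ H) => H'; lra.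
have b0 : b = 0 by case: (Rmult_integral _ _ E3) => H //; case: (Rmult_integral _ _ H) => H'; lra.
have a0 : a = 0 by move: Hs; rewrite b0 c0 ad; lra.
move=> v /memT [->|->|->|->]; rewrite -/a -/b -/c -/d; lra.
Qed.
End Dist.

Definition small (c2 c3 : R) := -1/2 < e * c2 < 1/2 /\ -1/2 < e * c3 < 1/2.

Lemma sepT i j k l c0 c1 c2 c3 : (i < j)%N -> (j < m)%N -> (k < l)%N -> (l < m)%N ->
  0 <= qv c0 c1 c2 c3 (tR i) -> 0 <= qv c0 c1 c2 c3 (tR j) ->
  0 < (qv c0 c1 c2 c3 (tR i) + qv c0 c1 c2 c3 (tR j))/2 + e * c3 ->
  0 < (qv c0 c1 c2 c3 (tR i) + qv c0 c1 c2 c3 (tR j))/2 + e * c2 ->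
  (qv c0 c1 c2 c3 (tR i) = 0 -> vA i \in T k l) ->
  (qv c0 c1 c2 c3 (tR j) = 0 -> vA j \in T k l) ->
  qv c0 c1 c2 c3 (tR k) <= 0 -> qv c0 c1 c2 c3 (tR l) <= 0 ->
  (qv c0 c1 c2 c3 (tR k) + qv c0 c1 c2 c3 (tR l))/2 + e * c3 <= 0 ->
  (qv c0 c1 c2 c3 (tR k) + qv c0 c1 c2 c3 (tR l))/2 + e * c2 <= 0 ->
  forall x, (in_conv phi (T i j) x /\ in_conv phi (T k l) x) <-> in_conv phi (T i j :&: T k l) x.
Proof.
move=> Hij Hj Hkl Hl h1 h2 h3 h4 h5 h6 h7 h8 h9 h10.
have Hi : (i < m)%N by apply: ltn_trans Hj.
have Hk : (k < m)%N by apply: ltn_trans Hl.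
apply: (@sep_conv _ phi c0 c1 c2 c3).
- move=> v /memT [->|->|->|->];
  [rewrite phiA // fval_a | rewrite phiA // fval_a | rewrite phiB // fval_b | rewrite phiC // fval_c]; lra.
- move=> v /memT [->|->|->|->];
  [rewrite phiA // fval_a | rewrite phiA // fval_a | rewrite phiB // fval_b | rewrite phiC // fval_c] => H; try lra; auto.
- move=> v /memT [->|->|->|->];
  [rewrite phiA // fval_a | rewrite phiA // fval_a | rewrite phiB // fval_b | rewrite phiC // fval_c]; lra.
Qed.

Lemma tRn i j : i <> j -> tR i <> tR j.
Proof. exact: tR_neq. Qed.

Lemma disjT i j k l : (i < j)%N -> (j < m)%N -> (k < l)%N -> (l < m)%N ->
  i <> k -> i <> l -> j <> k -> j <> l ->
  small (L2 (tR i) (tR j) (tR k) (tR l) 1 1 (-1) (-1)) (L3 (tR i) (tR j) (tR k) (tR l) 1 1 (-1) (-1)) ->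
  forall x, (in_conv phi (T i j) x /\ in_conv phi (T k l) x) <-> in_conv phi (T i j :&: T k l) x.
Proof.
move=> Hij Hj Hkl Hl ik il jk jl [S2 S3].
have ij : i <> j by move=> E; rewrite E ltnn in Hij.
have kl : k <> l by move=> E; rewrite E ltnn in Hkl.
have [q1 [q2 [q3 q4]]] := @L_ok (tR i) (tR j) (tR k) (tR l) 1 1 (-1) (-1)
  (tRn ij) (tRn ik) (tRn il) (tRn jk) (tRn jl) (tRn kl).
apply: (@sepT i j k l (L0 (tR i) (tR j) (tR k) (tR l) 1 1 (-1) (-1))
  (L1 (tR i) (tR j) (tR k) (tR l) 1 1 (-1) (-1)) (L2 (tR i) (tR j) (tR k) (tR l) 1 1 (-1) (-1))
  (L3 (tR i) (tR j) (tR k) (tR l) 1 1 (-1) (-1))) => //; rewrite ?q1 ?q2 ?q3 ?q4; try lra.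
Qed.

Lemma shT i j k l s u w : (i < j)%N -> (j < m)%N -> (k < l)%N -> (l < m)%N ->
  s <> u -> s <> w -> u <> w ->
  (i = s /\ j = u \/ i = u /\ j = s) -> (k = s /\ l = w \/ k = w /\ l = s) ->
  small (Q2 (tR s) (tR u) (tR w)) 0 ->
  forall x, (in_conv phi (T i j) x /\ in_conv phi (T k l) x) <-> in_conv phi (T i j :&: T k l) x.
Proof.
move=> Hij Hj Hkl Hl su sw uw Hsu Hsw [S2 S3].
have [q1 [q2 q3]] := @Q_ok (tR s) (tR u) (tR w) (tRn su) (tRn sw) (tRn uw).
have memA : vA s \in T k l.
  by case: Hsw => [[-> ->]|[-> ->]]; rewrite /T !in_setU1 eqxx ?orbT.
case: Hsu => [[Ei Ej]|[Ei Ej]]; subst i j; case: Hsw => [[Ek El]|[Ek El]]; subst k l;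
 apply: (@sepT _ _ _ _ (Q0 (tR s) (tR u) (tR w)) (Q1 (tR s) (tR u) (tR w)) (Q2 (tR s) (tR u) (tR w)) 0) => //;
 rewrite ?q1 ?q2 ?q3; try lra; auto.
Qed.

Hypothesis smallD : forall i j k l, (i < m)%N -> (j < m)%N -> (k < m)%N -> (l < m)%N ->
  small (L2 (tR i) (tR j) (tR k) (tR l) 1 1 (-1) (-1)) (L3 (tR i) (tR j) (tR k) (tR l) 1 1 (-1) (-1)).
Hypothesis smallS : forall s u w, (s < m)%N -> (u < m)%N -> (w < m)%N ->
  small (Q2 (tR s) (tR u) (tR w)) 0.

Lemma pairT i j k l : (i < j)%N -> (j < m)%N -> (k < l)%N -> (l < m)%N ->
  forall x, (in_conv phi (T i j) x /\ in_conv phi (T k l) x) <-> in_conv phi (T i j :&: T k l) x.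
Proof.
move=> Hij Hj Hkl Hl.
have Hi : (i < m)%N by apply: ltn_trans Hj.
have Hk : (k < m)%N by apply: ltn_trans Hl.
case: (eqVneq i k) => [ik|ik].
  subst k; case: (eqVneq j l) => [jl|jl].
    by subst l; rewrite setIid; tauto.
  apply: (@shT _ _ _ _ i j l) => //; try lia; auto.
case: (eqVneq i l) => [il|il].
  subst l; apply: (@shT _ _ _ _ i j k) => //; try lia; auto.
case: (eqVneq j k) => [jk|jk].
  subst k; apply: (@shT _ _ _ _ j i l) => //; try lia; auto.
case: (eqVneq j l) => [jl|jl].
  subst l; apply: (@shT _ _ _ _ j i k) => //; try lia; auto.
apply: disjT => //; try (apply/eqP; done); auto.
Qed.

End Graph.

Definition Kc (m : nat) : R :=
  \big[Rplus/R0]_(p : 'I_m * 'I_m * 'I_m * 'I_m)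
     (Rabs (L2 (tR p.1.1.1) (tR p.1.1.2) (tR p.1.2) (tR p.2) 1 1 (-1) (-1))
      + Rabs (L3 (tR p.1.1.1) (tR p.1.1.2) (tR p.1.2) (tR p.2) 1 1 (-1) (-1)))
  + \big[Rplus/R0]_(p : 'I_m * 'I_m * 'I_m) Rabs (Q2 (tR p.1.1) (tR p.1.2) (tR p.2)).

Definition eps (m : nat) : R := / (2 * (1 + Kc m)).

Lemma Kc_ge0 m : 0 <= Kc m.
Proof.
rewrite /Kc; apply: Rplus_le_le_0_compat; apply: sumR_ge0 => p _.
  apply: Rplus_le_le_0_compat; apply: Rabs_pos.
apply: Rabs_pos.
Qed.

Lemma eps_pos m : 0 < eps m.
Proof. rewrite /eps; have := Kc_ge0 m => H; apply: Rinv_0_lt_compat; lra. Qed.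

Lemma eps_small m X : 0 <= X -> X <= Kc m -> eps m * X < 1/2.
Proof.
move=> H0 HX; have He := eps_pos m; have HK := Kc_ge0 m.
have E : eps m * (2 * (1 + Kc m)) = 1 by rewrite /eps Rinv_l //; lra.
have : eps m * X <= eps m * Kc m by apply: Rmult_le_compat_l; lra.
nra.
Qed.

Lemma small_of e a b : 0 < e -> e * (Rabs a + Rabs b) < 1/2 -> small e a b.
Proof.
move=> He H; rewrite /small.
have Ha : e * Rabs a < 1/2 by have := Rabs_pos b; nra.
have Hb : e * Rabs b < 1/2 by have := Rabs_pos a; nra.
move: Ha Hb; rewrite /Rabs; case: Rcase_abs => ?; case: Rcase_abs => ?; move=> Ha Hb; split; split; nra.
Qed.

Lemma smallD_ok m i j k l : (i < m)%N -> (j < m)%N -> (k < m)%N -> (l < m)%N ->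
  small (eps m) (L2 (tR i) (tR j) (tR k) (tR l) 1 1 (-1) (-1)) (L3 (tR i) (tR j) (tR k) (tR l) 1 1 (-1) (-1)).
Proof.
move=> Hi Hj Hk Hl; apply: small_of; first exact: eps_pos.
apply: eps_small; first by apply: Rplus_le_le_0_compat; apply: Rabs_pos.
rewrite /Kc.
set p0 : 'I_m * 'I_m * 'I_m * 'I_m := (Ordinal Hi, Ordinal Hj, Ordinal Hk, Ordinal Hl).
have T1 := @sumR_term _ (fun _ => true)
  (fun p : 'I_m * 'I_m * 'I_m * 'I_m => Rabs (L2 (tR p.1.1.1) (tR p.1.1.2) (tR p.1.2) (tR p.2) 1 1 (-1) (-1))
      + Rabs (L3 (tR p.1.1.1) (tR p.1.1.2) (tR p.1.2) (tR p.2) 1 1 (-1) (-1))) p0.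
have T2 := @sumR_ge0 _ (fun _ => true) (fun p : 'I_m * 'I_m * 'I_m => Rabs (Q2 (tR p.1.1) (tR p.1.2) (tR p.2))).
simpl in T1; have := T2 (fun p _ => Rabs_pos _).
have := T1 (fun p _ => Rplus_le_le_0_compat _ _ (Rabs_pos _) (Rabs_pos _)) isT.
move=> A B; rewrite -[X in X <= _]Rplus_0_r; apply: Rplus_le_compat; [exact: A|exact: B].
Qed.

Lemma smallS_ok m s u w : (s < m)%N -> (u < m)%N -> (w < m)%N ->
  small (eps m) (Q2 (tR s) (tR u) (tR w)) 0.
Proof.
move=> Hs Hu Hw; apply: small_of; first exact: eps_pos.
apply: eps_small; first by apply: Rplus_le_le_0_compat; apply: Rabs_pos.
rewrite /Kc Rabs_R0 Rplus_0_r.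
set p0 : 'I_m * 'I_m * 'I_m := (Ordinal Hs, Ordinal Hu, Ordinal Hw).
have T1 := @sumR_term _ (fun _ => true)
  (fun p : 'I_m * 'I_m * 'I_m => Rabs (Q2 (tR p.1.1) (tR p.1.2) (tR p.2))) p0.
have T2 := @sumR_ge0 _ (fun _ => true)
  (fun p : 'I_m * 'I_m * 'I_m * 'I_m => Rabs (L2 (tR p.1.1.1) (tR p.1.1.2) (tR p.1.2) (tR p.2) 1 1 (-1) (-1))
      + Rabs (L3 (tR p.1.1.1) (tR p.1.1.2) (tR p.1.2) (tR p.2) 1 1 (-1) (-1))).
simpl in T1; have := T1 (fun p _ => Rabs_pos _) isT.
have := T2 (fun p _ => Rplus_le_le_0_compat _ _ (Rabs_pos _) (Rabs_pos _)).
move=> B A; rewrite -[X in X <= _]Rplus_0_l; apply: Rplus_le_compat; [exact: B|exact: A].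
Qed.

Definition Ed (n' m : nat) : {set {set 'I_n'.+1}} :=
  [set S : {set 'I_n'.+1} | [exists i : 'I_m, exists j : 'I_m, (i < j)%N && (S == T n' m i j)]].

Lemma memEd n' m S : S \in Ed n' m -> exists i j : nat, [/\ (i < j)%N, (j < m)%N & S = T n' m i j].
Proof.
rewrite inE => /existsP [i /existsP [j /andP [Hij /eqP ->]]].
by exists i, j; split.
Qed.

Lemma unifE n' m (Hmn : (m * m <= n'.+1)%N) S : S \in Ed n' m -> #|S| = 4%N.
Proof. by case/memEd => i [j [Hij Hj ->]]; apply: cardT. Qed.

Definition Hg n' m (Hmn : (m * m <= n'.+1)%N) : hypergraph n'.+1 4 :=
  Hypergraph (unifE Hmn).

Lemma embHg n' m (Hmn : (m * m <= n'.+1)%N) : embeddable 3 (Hg Hmn).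
Proof.
exists (@phi n' m (eps m)); split.
- move=> S /memEd [i [j [Hij Hj ->]]]; apply: affT => //.
  by have := eps_pos m; lra.
- move=> S1 S2 /memEd [i [j [Hij Hj ->]]] /memEd [k [l [Hkl Hl ->]]].
  apply: pairT => //.
  + exact: smallD_ok.
  + exact: smallS_ok.
Qed.

Lemma chisHg n' m (Hmn : (m * m <= n'.+1)%N) : (m <= chis (Hg Hmn))%N.
Proof.
rewrite /chis; case: ex_minnP => c Hc _.
case/existsP: Hc => kappa /forallP Hk.
pose g (i : 'I_m) : 'I_c := kappa (vA n' m i).
suff ginj : injective g by have := leq_card g ginj; rewrite !card_ord.
have key : forall i j : nat, (i < j)%N -> (j < m)%N -> kappa (vA n' m i) = kappa (vA n' m j) -> False.
  move=> i j Hij Hj E.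
  have HT : T n' m i j \in hedges (Hg Hmn).
    rewrite /= inE; apply/existsP; exists (Ordinal (ltn_trans Hij Hj)); apply/existsP.
    by exists (Ordinal Hj); rewrite /= Hij eqxx.
  have := Hk (T n' m i j); rewrite HT /= -(cardT Hmn Hij Hj).
  move=> /imset_injP inj.
  have := inj _ _ _ _ E; rewrite /T !in_setU1 !eqxx ?orbT => /(_ isT isT) EA.
  by have := nAiAj Hmn Hij Hj; rewrite EA eqxx.
move=> i j E; apply: val_inj; case: (ltngtP i j) => // H.
- by case: (key _ _ H (ltn_ord j) E).
- by case: (key _ _ H (ltn_ord i) (esym E)).
Qed.

Local Close Scope R_scope.

Theorem mainTheorem9 (n : nat) :
  4 <= n ->
  exists H : hypergraph n 4, embeddable 3 H /\ Nat.sqrt n <= chis H.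
Proof.
case: n => [|n'] // Hn.
have Hmn : (Nat.sqrt n'.+1 * Nat.sqrt n'.+1 <= n'.+1)%N.
  have [H1 _] := Nat.sqrt_spec' n'.+1; apply/leP; exact: H1.
exists (Hg Hmn); split; [exact: embHg | exact: chisHg].
Qed.
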